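(* Let $G$ be a graph with an assignment $L$ of lists of colours to its edges, and let $v_1v_2$ and $w_1w_2$ be two edges of $G$ that share no endpoint. Suppose $$|L(v_1v_2)|\,|L(w_1w_2)| \;>\; \sum_{\substack{i,j\in\{1,2\}\\ v_iw_j\in E(G)}} \left\lfloor \frac{|L(v_iw_j)|}{2}\right\rfloor \left\lceil \frac{|L(v_iw_j)|}{2}\right\rceil .$$ Then there exist colours $c_1\in L(v_1v_2)$ and $c_2\in L(w_1w_2)$ that are compatible.
   Context: For edges $e,f$ of $G$ and colours $c_1\in L(e)$, $c_2\in L(f)$, the colours $c_1,c_2$ are called compatible if $c_1=c_2$, or if for every edge $g$ that is adjacent to (shares an endpoint with) both $e$ and $f$, the list $L(g)$ contains at most one of $c_1$ and $c_2$. *)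

(* Defs.v *)
From mathcomp Require Import all_boot.
Set Implicit Arguments. Unset Strict Implicit. Unset Printing Implicit Defensive.

(* An edge is given by an (ordered) pair of its endpoints (x, y) with adj x y;
   the list assignment L : T -> T -> {set C} is required to be symmetric on
   edges, so that L x y = L y x is the list of the (unordered) edge xy. *)
Definition simple_graph (T : finType) (adj : rel T) : Prop :=
  symmetric adj /\ irreflexive adj.

Definition list_assignment (T C : finType) (adj : rel T) (L : T -> T -> {set C}) : Prop :=
  forall x y, adj x y -> L x y = L y x.

Definition shares_endpoint (T : eqType) (x y a b : T) : bool :=
  [|| x == a, x == b, y == a | y == b].

Definition compatible (T C : finType) (adj : rel T) (L : T -> T -> {set C})
    (a b a' b' : T) (c1 c2 : C) : Prop :=
  c1 = c2 \/
  forall x y, adj x y -> shares_endpoint x y a b -> shares_endpoint x y a' b' ->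
    ~ (c1 \in L x y /\ c2 \in L x y).

Definition fc (n : nat) : nat := n./2 * uphalf n.

(* Main.v *)
Require Import Defs.
From mathcomp Require Import all_boot.
From mathcomp Require Import zify.
Lemma fc_bound a b n : a + b <= n -> a * b <= fc n.
Proof.
rewrite /fc uphalf_half => H.
have E := odd_double_half n.
move: (odd n) E H => r.
set h := n./2 => E H.
have Hr : r <= 1 by case: r E.
have En : n = h.*2 + r by lia.
rewrite En in H.
have [Ha|Ha] := leqP a h.
  have Hb : b <= h.*2 + r - a by lia.
  apply: (leq_trans (leq_mul (leqnn a) Hb)).
  have : a * (h.*2 + r - a) + (h - a) * (h - a) + r * (h - a) = (r + h) * h by nia.
  lia.
have Hb : b <= h by lia.
have Ha' : a <= h.*2 + r - b by lia.
apply: (leq_trans (leq_mul Ha' (leqnn b))).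
have : (h.*2 + r - b) * b + (h - b) * (h - b) + r * (h - b) = (r + h) * h by nia.
lia.
Qed.

Theorem lemma9 (T C : finType) (adj : rel T) (L : T -> T -> {set C})
    (v1 v2 w1 w2 : T) :
  simple_graph adj -> list_assignment adj L ->
  adj v1 v2 -> adj w1 w2 ->
  v1 != w1 -> v1 != w2 -> v2 != w1 -> v2 != w2 ->
  #|L v1 v2| * #|L w1 w2| >
    \sum_(p <- [:: (v1, w1); (v1, w2); (v2, w1); (v2, w2)] | adj p.1 p.2)
       fc #|L p.1 p.2| ->
  exists c1 c2, [/\ c1 \in L v1 v2, c2 \in L w1 w2 &
                    compatible adj L v1 v2 w1 w2 c1 c2].
Proof.
move=> [asym airr] HL e1 e2 n11 n12 n21 n22 Hsum.
set A := L v1 v2. set B := L w1 w2.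
case: (set_0Vmem (A :&: B)) => [AB0|[c]]; last first.
  rewrite inE => /andP[cA cB]; exists c, c; split => //; by left.
pose S (p : T * T) : {set C * C} :=
  [set c | adj p.1 p.2 && ((c.1 \in A :&: L p.1 p.2) && (c.2 \in B :&: L p.1 p.2))].
have HS p : #|S p| <= (if adj p.1 p.2 then fc #|L p.1 p.2| else 0).
  case Hp: (adj p.1 p.2).
    have -> : S p = setX (A :&: L p.1 p.2) (B :&: L p.1 p.2).
      by apply/setP => c; rewrite !inE Hp.
    rewrite cardsX; apply: fc_bound.
    have <- : #|(A :&: L p.1 p.2) :|: (B :&: L p.1 p.2)| =
              #|A :&: L p.1 p.2| + #|B :&: L p.1 p.2|.
      rewrite cardsU.
      have -> : (A :&: L p.1 p.2) :&: (B :&: L p.1 p.2) = set0.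
        apply/setP => x; rewrite !inE.
        have := congr1 (fun X : {set C} => x \in X) AB0; rewrite /= !inE.
        by case: (x \in A); case: (x \in B); case: (x \in L p.1 p.2).
      by rewrite cards0 subn0.
    apply: subset_leq_card; apply/subsetP => x; rewrite !inE.
    by case/orP => /andP[].
  have -> : S p = set0 by apply/setP => c; rewrite !inE Hp.
  by rewrite cards0.
set U := S (v1, w1) :|: S (v1, w2) :|: S (v2, w1) :|: S (v2, w2).
have HU : #|U| < #|setX A B|.
  rewrite cardsX; apply: leq_ltn_trans Hsum.
  rewrite big_mkcond !big_cons big_nil /=.
  apply: (leq_trans (leq_card_setU _ _)).
  rewrite addn0 !addnA; apply: leq_add; last exact: (HS (v2, w2)).
  apply: (leq_trans (leq_card_setU _ _)).
  apply: leq_add; last exact: (HS (v2, w1)).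
  apply: (leq_trans (leq_card_setU _ _)).
  apply: leq_add; [exact: (HS (v1, w1))|exact: (HS (v1, w2))].
have : ~~ (setX A B \subset U).
  apply/negP => /subset_leq_card; by rewrite leqNgt HU.
case/subsetPn => [[c1 c2]]; rewrite inE /= => /andP[c1A c2B] cU.
exists c1, c2; split => //; right => x y exy sh1 sh2 [h1 h2].
move/negP: cU; apply.
have key : forall i j, adj i j -> c1 \in L i j -> c2 \in L i j -> (c1, c2) \in S (i, j).
  by move=> i j eij hi hj; rewrite inE /= eij !inE c1A c2B hi hj.
have rev : forall i j, adj j i -> c1 \in L j i -> c2 \in L j i -> (c1, c2) \in S (i, j).
  move=> i j eij; rewrite (HL _ _ eij) => hi hj; apply: key => //.
  by rewrite asym.
rewrite !in_setU.
move: sh1 sh2; rewrite /shares_endpoint.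
case/or4P => /eqP E1; case/or4P => /eqP E2; subst;
  rewrite ?eqxx ?airr in n11 n12 n21 n22 exy |- *;
  try discriminate;
  try (by rewrite (key _ _ exy h1 h2) ?orbT);
  try (by rewrite (rev _ _ exy h1 h2) ?orbT).
Qed.
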